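(* If $G$ is a $TR^{*}$-group, then the set $\mathrm{Tor}(G)$ of all torsion elements of $G$ is a normal subgroup of $G$.
   Context: For $g,x$ in a group, $g^{x}:=xgx^{-1}$. A non-trivial element $g$ of a group $G$ is a generalized torsion element if there exist a positive integer $n$ and $x_1,\ldots,x_n\in G$ with $g^{x_1}g^{x_2}\cdots g^{x_n}=1$. A group is a $TR^{*}$-group if every generalized torsion element of it is a torsion element. *)

(* Defs.v *)
From Stdlib Require Import List.
Import ListNotations.

Record Group := {
  carrier :> Type;
  gmul : carrier -> carrier -> carrier;
  gone : carrier;
  ginv : carrier -> carrier;
  gmul_assoc : forall a b c, gmul a (gmul b c) = gmul (gmul a b) c;
  gmul_1l : forall a, gmul gone a = a;
  gmul_1r : forall a, gmul a gone = a;
  gmul_Vl : forall a, gmul (ginv a) a = gone;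
  gmul_Vr : forall a, gmul a (ginv a) = gone
}.

Arguments gmul {G} : rename.
Arguments gone {G} : rename.
Arguments ginv {G} : rename.

Definition conj {G : Group} (g x : G) : G := gmul x (gmul g (ginv x)).

Fixpoint gpow {G : Group} (g : G) (n : nat) : G :=
  match n with
  | O => gone
  | S k => gmul g (gpow g k)
  end.

Definition conj_prod {G : Group} (g : G) (xs : list G) : G :=
  fold_right (fun x acc => gmul (conj g x) acc) gone xs.

Definition torsion {G : Group} (g : G) : Prop :=
  exists n : nat, 1 <= n /\ gpow g n = gone.

Definition gen_torsion {G : Group} (g : G) : Prop :=
  g <> gone /\ exists xs : list G, 1 <= length xs /\ conj_prod g xs = gone.

Definition TRstar (G : Group) : Prop :=
  forall g : G, gen_torsion g -> torsion g.

Definition is_subgroup {G : Group} (H : G -> Prop) : Prop :=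
  H gone /\ (forall a b, H a -> H b -> H (gmul a b)) /\ (forall a, H a -> H (ginv a)).

Definition is_normal_subgroup {G : Group} (H : G -> Prop) : Prop :=
  is_subgroup H /\ (forall g x, H g -> H (conj g x)).

Definition Tor (G : Group) : G -> Prop := fun g => torsion g.

(* Main.v *)
Require Import Defs.
From Stdlib Require Import List Lia Classical.
Import ListNotations.

Arguments gmul_assoc {c} a b c0 : rename.
Section S.
Variable G : Group.
Implicit Types a b c g x : G.

Lemma inv_uniq a b : gmul a b = gone -> b = ginv a.
Proof.
  intro H. rewrite <- (gmul_1l G b), <- (gmul_Vl G a), <- gmul_assoc, H, gmul_1r. reflexivity.
Qed.

Lemma inv_uniq_l a b : gmul a b = gone -> a = ginv b.
Proof.
  intro H. rewrite <- (gmul_1r G a), <- (gmul_Vr G b), gmul_assoc, H, gmul_1l. reflexivity.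
Qed.

Lemma inv_mul a b : ginv (gmul a b) = gmul (ginv b) (ginv a).
Proof.
  symmetry. apply inv_uniq.
  rewrite gmul_assoc, <- (gmul_assoc a b), gmul_Vr, gmul_1r, gmul_Vr. reflexivity.
Qed.

Lemma inv_one : ginv (@gone G) = gone.
Proof. symmetry; apply inv_uniq; apply gmul_1l. Qed.

Lemma inv_inv a : ginv (ginv a) = a.
Proof. symmetry; apply inv_uniq; apply gmul_Vl. Qed.

Lemma mulK c y : gmul (ginv c) (gmul c y) = y.
Proof. now rewrite gmul_assoc, gmul_Vl, gmul_1l. Qed.

Lemma gpow_add g n m : gpow g (n + m) = gmul (gpow g n) (gpow g m).
Proof.
  induction n; simpl. now rewrite gmul_1l. now rewrite IHn, gmul_assoc.
Qed.

Lemma gpow_one n : gpow (@gone G) n = gone.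
Proof. induction n; simpl; auto. now rewrite IHn, gmul_1l. Qed.

Lemma gpow_mul g n m : gpow g (n * m) = gpow (gpow g n) m.
Proof.
  induction m; simpl.
  - now rewrite PeanoNat.Nat.mul_0_r.
  - rewrite <- IHm, <- gpow_add. f_equal. lia.
Qed.

Lemma gpow_comm g n : gmul g (gpow g n) = gmul (gpow g n) g.
Proof.
  change (gmul g (gpow g n)) with (gpow g (1 + n)).
  rewrite PeanoNat.Nat.add_comm, gpow_add. simpl. now rewrite gmul_1r.
Qed.

Lemma gpow_inv g n : gpow (ginv g) n = ginv (gpow g n).
Proof.
  induction n; simpl. now rewrite inv_one.
  rewrite IHn, <- inv_mul. f_equal. symmetry. apply gpow_comm.
Qed.

Lemma gpow_conj g x n : gpow (conj g x) n = conj (gpow g n) x.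
Proof.
  unfold conj. induction n; simpl.
  - now rewrite gmul_1l, gmul_Vr.
  - rewrite IHn. rewrite !gmul_assoc. f_equal.
    rewrite <- !gmul_assoc. f_equal. f_equal.
    rewrite gmul_assoc, gmul_Vl, gmul_1l. reflexivity.
Qed.

Lemma conj_prod_map g c xs :
  conj_prod g (map (gmul c) xs) = gmul c (gmul (conj_prod g xs) (ginv c)).
Proof.
  induction xs as [|x xs IH]; simpl.
  - now rewrite gmul_1l, gmul_Vr.
  - rewrite IH. unfold conj. rewrite inv_mul.
    rewrite !gmul_assoc. f_equal.
    rewrite <- (gmul_assoc _ (ginv c) c), gmul_Vl, gmul_1r. reflexivity.
Qed.

Lemma conj_prod_app g xs ys :
  conj_prod g (xs ++ ys) = gmul (conj_prod g xs) (conj_prod g ys).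
Proof.
  induction xs; simpl. now rewrite gmul_1l. now rewrite IHxs, gmul_assoc.
Qed.

Fixpoint L c k : list G :=
  match k with O => [] | S k => c :: map (gmul c) (L c k) end.

Lemma L_length c k : length (L c k) = k.
Proof. induction k; simpl; auto. now rewrite length_map, IHk. Qed.

Lemma L_prop g c k : gmul (conj_prod g (L c k)) (gpow c k) = gpow (gmul c g) k.
Proof.
  induction k; simpl. apply gmul_1l.
  rewrite <- IHk, conj_prod_map. unfold conj.
  rewrite <- !gmul_assoc, !mulK. reflexivity.
Qed.

Fixpoint R (l : list G) n : list G :=
  match n with O => [] | S n => l ++ R l n end.

Lemma R_prop g l n : conj_prod g (R l n) = gpow (conj_prod g l) n.
Proof. induction n; simpl; auto. now rewrite conj_prod_app, IHn. Qed.

Lemma R_length l n : length (R l n) = n * length l.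
Proof. induction n; simpl; auto. rewrite length_app, IHn. lia. Qed.

Lemma prod_gen a b n m : 1 <= n -> 1 <= m -> gpow a n = gone -> gpow b m = gone ->
  exists xs, 1 <= length xs /\ conj_prod (gmul a b) xs = gone.
Proof.
  intros Hn Hm Ha Hb.
  pose proof (L_prop (gmul a b) (ginv a) m) as H.
  rewrite gmul_assoc, gmul_Vl, gmul_1l, Hb in H.
  apply inv_uniq_l in H. rewrite gpow_inv, inv_inv in H.
  exists (R (L (ginv a) m) n). split.
  - rewrite R_length, L_length. nia.
  - rewrite R_prop, H, <- gpow_mul, PeanoNat.Nat.mul_comm, gpow_mul, Ha.
    apply gpow_one.
Qed.

End S.

Theorem corollary2p2 (G : Group) : TRstar G -> is_normal_subgroup (Tor G).
Proof.
  intro HT. unfold Tor. repeat split.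
  - exists 1. split; auto. simpl. apply gmul_1l.
  - intros a b [n [Hn Ha]] [m [Hm Hb]].
    destruct (Classical_Prop.classic (gmul a b = gone)) as [E|E].
    + exists 1. split; auto. simpl. now rewrite E, gmul_1l.
    + apply HT. split; auto. exact (prod_gen G a b n m Hn Hm Ha Hb).
  - intros a [n [Hn Ha]]. exists n. split; auto. now rewrite gpow_inv, Ha, inv_one.
  - intros g x [n [Hn Ha]]. exists n. split; auto. rewrite gpow_conj, Ha.
    unfold conj. now rewrite gmul_1l, gmul_Vr.
Qed.
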